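(* Let $n\ge2$ and let $\mathfrak{g}_n$ be the Lie algebra defined in the context. The linear map $\rho:\mathfrak{g}_n\to\mathfrak{sl}_{2(n-1)}(\mathbb{K})$ sending $$x=ah+bx_++cx_-+\sum_{i=1}^{n-2}(d_iy_{i,+}+e_iy_{i,-})+\sum_{1\le i\le j\le n-2}m_{ij}z_{i,j}$$ to the $2(n-1)\times2(n-1)$ matrix $X$ whose rows $1,\dots,n-2$ are zero, whose row $n-1$ is $(d_1,\dots,d_{n-2},a,b,0,\dots,0)$, whose row $n$ is $(e_1,\dots,e_{n-2},c,-a,0,\dots,0)$, and whose row $n+i$ ($1\le i\le n-2$) is $(\mu_{i1},\dots,\mu_{i,n-2},-e_i,d_i,0,\dots,0)$, where $\mu$ is the symmetric $(n-2)\times(n-2)$ matrix with $\mu_{ii}=2m_{ii}$ and $\mu_{ij}=\mu_{ji}=m_{ij}$ for $i<j$, is a faithful representation of $\mathfrak{g}_n$. Equivalently, in terms of matrix units $E_{i,j}$: $\rho(x_+)=E_{n-1,n}$, $\rho(x_-)=E_{n,n-1}$, $\rho(h)=E_{n-1,n-1}-E_{n,n}$, $\rho(y_{i,+})=E_{n-1,i}+E_{n+i,n}$, $\rho(y_{i,-})=E_{n,i}-E_{n+i,n-1}$, $\rho(z_{i,j})=E_{i+n,j}+E_{j+n,i}$.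
   Context: $\mathbb{K}$ is $\mathbb{R}$ or $\mathbb{C}$. For $n\ge2$, $\mathfrak{g}_n$ is the Lie algebra with basis $h,x_-,x_+$, $y_{i,\pm}$ ($1\le i\le n-2$), $z_{i,j}$ ($1\le i\le j\le n-2$), with Lie bracket defined by the nonzero brackets (up to antisymmetry) $[x_+,x_-]=h$, $[h,x_\pm]=\pm2x_\pm$, $[h,y_{i,\pm}]=\pm y_{i,\pm}$, $[x_-,y_{i,+}]=y_{i,-}$, $[x_+,y_{i,-}]=y_{i,+}$, $[y_{i,+},y_{j,-}]=z_{\min(i,j),\max(i,j)}$, all other brackets of basis elements being zero. $E_{i,j}$ denotes the matrix whose only nonzero entry is a $1$ in position $(i,j)$. *)

(* Defs.v *)
From mathcomp Require Import all_boot all_order all_algebra.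
From mathcomp Require Import Rstruct complex.

Set Implicit Arguments.
Unset Strict Implicit.
Unset Printing Implicit Defensive.

Import GRing.Theory.
Local Open Scope ring_scope.

(** Index set of the z_{i,j}, 1 <= i <= j <= n-2 (0-based here: i j : 'I_k). *)
Definition zpairs (k : nat) := {p : 'I_k * 'I_k | (p.1 <= p.2)%N}.

(** Basis of g_n:
    inl (inl None)          = h
    inl (inl (Some true))   = x_+
    inl (inl (Some false))  = x_-
    inl (inr (true, i))     = y_{i+1,+}
    inl (inr (false, i))    = y_{i+1,-}
    inr (exist (i, j) _)    = z_{i+1,j+1}   (i <= j)                      *)
Definition gbasis (k : nat) : finType :=
  ((option bool + (bool * 'I_k)) + zpairs k)%type.

Definition b_h {k} : gbasis k := inl (inl None).
Definition b_x {k} (s : bool) : gbasis k := inl (inl (Some s)).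
Definition b_y {k} (s : bool) (i : 'I_k) : gbasis k := inl (inr (s, i)).

Lemma zswap_proof k (i j : 'I_k) : ~~ (i <= j)%N -> (j <= i)%N.
Proof. by rewrite -ltnNge => /ltnW. Qed.

Definition b_z {k} (i j : 'I_k) : gbasis k :=
  inr (match boolP (i <= j)%N with
       | AltTrue h => exist (fun p : 'I_k * 'I_k => (p.1 <= p.2)%N) (i, j) h
       | AltFalse h => exist (fun p : 'I_k * 'I_k => (p.1 <= p.2)%N) (j, i)
                              (zswap_proof h)
       end).

Notation gn K n := {ffun gbasis (n - 2) -> K} (only parsing).

Definition gvec {K : fieldType} {n} (b : gbasis (n - 2)) : gn K n :=
  [ffun c => (c == b)%:R].

Definition gscale {K : fieldType} {n} (a : K) (u : gn K n) : gn K n :=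
  [ffun c => a * u c].

(** The listed nonzero brackets (one orientation each). *)
Definition gbr0 {K : fieldType} {n} (b c : gbasis (n - 2)) : gn K n :=
  match b, c with
  | inl (inl (Some true)), inl (inl (Some false)) => gvec b_h
      (* [x_+, x_-] = h *)
  | inl (inl None), inl (inl (Some s)) => gscale (if s then 2 else -2) (gvec (b_x s))
      (* [h, x_(+/-)] = +/- 2 x_(+/-) *)
  | inl (inl None), inl (inr (s, i)) => gscale (if s then 1 else -1) (gvec (b_y s i))
      (* [h, y_(i,+/-)] = +/- y_(i,+/-) *)
  | inl (inl (Some false)), inl (inr (true, i)) => gvec (b_y false i)
      (* [x_-, y_(i,+)] = y_(i,-) *)
  | inl (inl (Some true)), inl (inr (false, i)) => gvec (b_y true i)
      (* [x_+, y_(i,-)] = y_(i,+) *)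
  | inl (inr (true, i)), inl (inr (false, j)) => gvec (b_z i j)
      (* [y_(i,+), y_(j,-)] = z_(min(i,j),max(i,j)) *)
  | _, _ => 0
  end.

Definition gbr_basis {K : fieldType} {n} (b c : gbasis (n - 2)) : gn K n :=
  gbr0 b c - gbr0 c b.

Definition gbracket {K : fieldType} {n} (u v : gn K n) : gn K n :=
  \sum_(b : gbasis (n - 2)) \sum_(c : gbasis (n - 2)) gscale (u b * v c) (gbr_basis b c).

(** Matrix unit E_{p,q} in the N x N matrices, with 1-based indices p q. *)
Definition Emx {K : fieldType} (N p q : nat) : 'M[K]_N :=
  \matrix_(i < N, j < N) ((i.+1 == p) && (j.+1 == q))%:R.

(** rho on the basis, with paper indices i' = i + 1. *)
Definition rho_basis {K : fieldType} {n} (b : gbasis (n - 2)) : 'M[K]_(2 * (n - 1)) :=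
  let N := (2 * (n - 1))%N in
  match b with
  | inl (inl None) => Emx N (n - 1) (n - 1) - Emx N n n
  | inl (inl (Some true)) => Emx N (n - 1) n
  | inl (inl (Some false)) => Emx N n (n - 1)
  | inl (inr (true, i)) => Emx N (n - 1) i.+1 + Emx N (n + i.+1) n
  | inl (inr (false, i)) => Emx N n i.+1 - Emx N (n + i.+1) (n - 1)
  | inr (exist (i, j) _) => Emx N (i.+1 + n) j.+1 + Emx N (j.+1 + n) i.+1
  end.

Definition rho {K : fieldType} {n} (u : gn K n) : 'M[K]_(2 * (n - 1)) :=
  \sum_(b : gbasis (n - 2)) u b *: rho_basis b.

Definition faithful_sl_rep (K : fieldType) (n : nat) : Prop :=
  [/\ forall u : gn K n, \tr (rho u) = 0,
      forall u v : gn K n,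
        rho (gbracket u v) = rho u *m rho v - rho v *m rho u
    & injective (@rho K n)].

(* Main.v *)
Require Import Defs.
From mathcomp Require Import all_boot all_order all_algebra.
From mathcomp Require Import Rstruct complex.
From mathcomp Require Import zify ring.
Set Implicit Arguments.
Unset Strict Implicit.
Unset Printing Implicit Defensive.
Import GRing.Theory Num.Theory.
Local Open Scope ring_scope.


Lemma EmxE (K : fieldType) N p q (i j : 'I_N) :
  (Emx N p q : 'M[K]_N) i j = ((i.+1 == p) && (j.+1 == q))%:R.
Proof. by rewrite mxE. Qed.

Lemma EmxM (K : fieldType) N p q r s :
  (Emx N p q : 'M[K]_N) *m Emx N r s =
  if (q == r) && (0 < q <= N)%N then Emx N p s else 0.
Proof.
apply/matrixP=> a b; rewrite !mxE.
case: ifP => [/andP[/eqP <- /andP[q0 qN]]|H].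
  have hq : (q.-1 < N)%N by lia.
  rewrite (bigD1 (Ordinal hq)) //= big1 ?addr0; last first.
    move=> j /eqP hj; rewrite !mxE.
    case: (j.+1 =P q) => [hjq|]; last by rewrite andbF mul0r.
    by exfalso; apply: hj; apply: val_inj => /=; lia.
  rewrite !mxE (_ : (q.-1).+1 = q) ?eqxx ?andbT; last by lia.
  by case: (a.+1 == p); case: (b.+1 == s); rewrite /= ?mulr1 ?mul0r ?mulr0.
rewrite mxE big1 // => j _; rewrite !mxE.
case: (j.+1 =P q) => [hjq|]; last by rewrite andbF mul0r.
case: (j.+1 =P r) => [hjr|]; last by rewrite andFb mulr0.
exfalso; move: H; have := ltn_ord j; rewrite -hjq -hjr eqxx; lia.
Qed.

Lemma tr_Emx (K : fieldType) N p q :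
  \tr (Emx N p q : 'M[K]_N) = if (p == q) && (0 < p <= N)%N then 1 else 0.
Proof.
rewrite /mxtrace; case: ifP => [/andP[/eqP <- /andP[q0 qN]]|H].
  have hq : (p.-1 < N)%N by lia.
  rewrite (bigD1 (Ordinal hq)) //= big1 ?addr0; last first.
    move=> j /eqP hj; rewrite !mxE.
    case: (j.+1 =P p) => [hjq|]; last by rewrite andbF.
    by exfalso; apply: hj; apply: val_inj => /=; lia.
  by rewrite mxE (_ : (p.-1).+1 = p) ?eqxx; last by lia.
rewrite big1 // => j _; rewrite !mxE.
case: (j.+1 =P p) => [hjq|//].
case: (j.+1 =P q) => [hjr|//].
exfalso; move: H; have := ltn_ord j; rewrite -hjq -hjr eqxx; lia.
Qed.


Lemma rhoD (K : fieldType) n (u v : {ffun gbasis (n - 2) -> K}) :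
  rho (u + v) = rho u + rho v.
Proof. by rewrite /rho -big_split; apply: eq_bigr => b _; rewrite ffunE scalerDl. Qed.

Lemma rhoN (K : fieldType) n (u : {ffun gbasis (n - 2) -> K}) :
  rho (- u) = - rho u.
Proof. by rewrite /rho -sumrN; apply: eq_bigr => b _; rewrite ffunE scaleNr. Qed.

Lemma rhoB (K : fieldType) n (u v : {ffun gbasis (n - 2) -> K}) :
  rho (u - v) = rho u - rho v.
Proof. by rewrite rhoD rhoN. Qed.

Lemma rho0 (K : fieldType) n : rho (0 : {ffun gbasis (n - 2) -> K}) = 0.
Proof. by rewrite /rho big1 // => b _; rewrite ffunE scale0r. Qed.

Lemma rho_sum (K : fieldType) n (I : finType) (F : I -> {ffun gbasis (n - 2) -> K}) :
  rho (\sum_i F i) = \sum_i rho (F i).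
Proof. exact: (big_morph _ (@rhoD K n) (@rho0 K n)). Qed.

Lemma rho_scale (K : fieldType) n a (u : {ffun gbasis (n - 2) -> K}) :
  rho (gscale a u) = a *: rho u.
Proof. by rewrite /rho scaler_sumr; apply: eq_bigr => b _; rewrite ffunE scalerA. Qed.

Lemma rho_gvec (K : fieldType) n (b : gbasis (n - 2)) :
  rho (gvec b : {ffun gbasis (n - 2) -> K}) = rho_basis b.
Proof.
rewrite /rho (bigD1 b) //= big1 ?addr0; first by rewrite ffunE eqxx scale1r.
by move=> c /negbTE hc; rewrite ffunE hc scale0r.

Qed.

Lemma rho_bz (K : fieldType) n (i j : 'I_(n - 2)) :
  (rho_basis (b_z i j) : 'M[K]_(2 * (n - 1))) =
  Emx _ (n + i.+1) j.+1 + Emx _ (n + j.+1) i.+1.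
Proof.
rewrite /b_z; case: {-}_ / boolP => h /=; rewrite !(addnC n) //.
by rewrite addrC.

Qed.

Lemma rho_z (K : fieldType) n (i j : 'I_(n - 2)) h :
  (rho_basis (inr (exist _ (i, j) h)) : 'M[K]_(2 * (n - 1))) =
  Emx _ (n + i.+1) j.+1 + Emx _ (n + j.+1) i.+1.
Proof. by rewrite /= !(addnC n). Qed.

Ltac dec := repeat match goal with |- context [if ?c then _ else _] =>
  let H := fresh in
  first [ have H : c = true by lia | have H : c = false by lia ];
  rewrite H; clear H end.

Lemma rho_br (K : fieldType) n (hn : (2 <= n)%N) (b c : gbasis (n - 2)) :
  rho (gbr_basis b c : {ffun gbasis (n - 2) -> K}) =
  rho_basis b *m rho_basis c - rho_basis c *m rho_basis b.
Proof.
rewrite /gbr_basis rhoB.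
case: b => [[[[]|]|[[] i]]|[[i j] hij]];
case: c => [[[[]|]|[[] i']]|[[i' j'] hij']];
  rewrite /= ?rho0 ?rho_scale ?rho_gvec ?rho_bz ?rho_z /=;

  rewrite ?(mulmxDl, mulmxDr, mulmxBl, mulmxBr, mulNmx, mulmxN, EmxM);
  try have := ltn_ord i; try have := ltn_ord j;
  try have := ltn_ord i'; try have := ltn_ord j'; intros; dec;
  apply/matrixP => a a'; rewrite !mxE; try ring.
Qed.



Ltac dec_C := repeat match goal with |- context [if ?c then _ else _] =>
  let H := fresh in
  first [ have H : c = true by lia | have H : c = false by lia ];
  rewrite H; clear H end.

Ltac splt := repeat (match goal with |- context [(?x == ?y)] => lazymatch type of x with nat => case: (x =P y) => ? end end).
Ltac addb := repeat match goal with i : _ |- _ =>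
  let H := constr:(ltn_ord i) in let P := type of H in
  lazymatch goal with _ : P |- _ => fail | _ => have := H; move=> ? end end.
Ltac ordeq := repeat match goal with i : ?T, j : ?T |- _ =>
  let H := constr:(ltn_ord i) in
  tryif unify i j then fail else (have ? : i = j by (apply: val_inj; simpl; lia)); subst end.
Ltac T1 := addb; rewrite /= ?rho_z !mxE /=; splt; try (exfalso; lia); simpl;
  rewrite ?(subr0, sub0r, addr0, add0r, oppr_eq0, oner_eq0) //; try (match goal with H : is_true (2 != 0) |- _ => exact H end).
Ltac T2 := addb; repeat match goal with H : context [fst (pair _ _)] |- _ => progress simpl in H end; rewrite /= ?rho_z !mxE /=; splt; try (exfalso; lia); try (simpl; ring); ordeq; try (match goal with H : is_true (_ != _) |- _ => by rewrite eqxx in H end);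
  try (match goal with H : is_true (inr (exist _ _ ?h1) != inr (exist _ _ ?h2)) |- _ =>
     by rewrite (bool_irrelevance h1 h2) eqxx in H end).

Lemma probe (K : fieldType) n (hn : (2 <= n)%N) (h2 : (2 : K) != 0) (b : gbasis (n - 2)) :
  exists (a c : 'I_(2 * (n - 1))),
    (rho_basis b : 'M[K]_(2 * (n - 1))) a c != 0 /\
    forall b', b' != b -> (rho_basis b' : 'M[K]_(2 * (n - 1))) a c = 0.
Proof.
have p0 : (n - 2 < 2 * (n - 1))%N by lia.
have p1 : (n - 1 < 2 * (n - 1))%N by lia.
have pj : forall j : 'I_(n - 2), (n + j < 2 * (n - 1))%N.
  by move=> j; have := ltn_ord j; lia.
have pi : forall j : 'I_(n - 2), (j < 2 * (n - 1))%N.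
  by move=> j; have := ltn_ord j; lia.
case: b => [[[[]|]|[[] i]]|[[i j] hij]].
- exists (Ordinal p0), (Ordinal p1); split; first by T1.
  by move=> b' hb; case: b' hb => [[[[]|]|[[] i']]|[[i' j'] hij']] hb; T2.
- exists (Ordinal p1), (Ordinal p0); split; first by T1.
  by move=> b' hb; case: b' hb => [[[[]|]|[[] i']]|[[i' j'] hij']] hb; T2.
- exists (Ordinal p0), (Ordinal p0); split; first by T1.
  by move=> b' hb; case: b' hb => [[[[]|]|[[] i']]|[[i' j'] hij']] hb; T2.
- exists (Ordinal p0), (Ordinal (pi i)); split; first by T1.
  by move=> b' hb; case: b' hb => [[[[]|]|[[] i']]|[[i' j'] hij']] hb; T2.
- exists (Ordinal p1), (Ordinal (pi i)); split; first by T1.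
  by move=> b' hb; case: b' hb => [[[[]|]|[[] i']]|[[i' j'] hij']] hb; T2.
- exists (Ordinal (pj j)), (Ordinal (pi i)); split; first by T1.
  by move=> b' hb; case: b' hb => [[[[]|]|[[] i']]|[[i' j'] hij']] hb; T2.
Qed.
Lemma tr_rho_basis (K : fieldType) n (hn : (2 <= n)%N) (b : gbasis (n - 2)) :
  \tr (rho_basis b : 'M[K]_(2 * (n - 1))) = 0.
Proof.
case: b => [[[[]|]|[[] i]]|[[i j] hij]];
  rewrite /= ?rho_z ?raddfD ?raddfB ?raddfN /= ?tr_Emx; try have := ltn_ord i;
  try have := ltn_ord j; intros; dec; ring.
Qed.

Lemma main (K : fieldType) n (hn : (2 <= n)%N) (h2 : (2 : K) != 0) :
  faithful_sl_rep K n.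
Proof.
split.
- move=> u; rewrite /rho (big_morph _ (@mxtraceD _ _) (mxtrace0 _ _)) big1 // => b _.
  by rewrite mxtraceZ tr_rho_basis // mulr0.
- have E : forall u v : {ffun gbasis (n - 2) -> K}, rho u *m rho v =
     \sum_b \sum_c (u b * v c) *: (rho_basis b *m rho_basis c).
    move=> u v; rewrite /rho mulmx_suml; apply: eq_bigr => b _.
    rewrite mulmx_sumr; apply: eq_bigr => c _.
    by rewrite -scalemxAl -scalemxAr scalerA.
  move=> u v; rewrite !E (exchange_big _ _ _ _ _ (fun c b => (v c * u b) *: _)).
  rewrite /gbracket rho_sum -sumrB; apply: eq_bigr => b _.
  rewrite rho_sum -sumrB; apply: eq_bigr => c _.
  by rewrite rho_scale rho_br // scalerBr (mulrC (v c)).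
- move=> u v huv.
  have hw : rho (u - v) = 0 by rewrite rhoB huv subrr.
  apply/eqP; rewrite -subr_eq0; apply/eqP/ffunP => b; rewrite !ffunE.
  have [a [c [hnz hz]]] := probe hn h2 b.
  have : (rho (u - v)) a c = (u - v) b * (rho_basis b) a c.
    rewrite /rho summxE (bigD1 b) //= big1 ?addr0; first by rewrite mxE.
    by move=> b' hb'; rewrite mxE hz // mulr0.
  rewrite hw mxE ffunE => /esym/eqP; rewrite mulf_eq0 (negbTE hnz) orbF.
  by rewrite ffunE => /eqP.
Qed.

Theorem proposition3p5 (n : nat) (hn : (2 <= n)%N) :
  faithful_sl_rep Rdefinitions.R n /\ faithful_sl_rep (Rdefinitions.R)[i] n.
Proof.
by split; apply: main => //; rewrite pnatr_eq0.
Qed.
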